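(* In the push-based remote estimation problem described in the context, if $\beta<1$ there are at least $|\mathcal{S}|$ local optima (joint encoder–decoder policies that are Nash equilibria, i.e., from which neither the encoder nor the decoder can improve the objective by unilaterally changing its own policy), even without imposing the perfect-estimation constraint.
   Context: Remote estimation problem: finite state set $\mathcal{S}$, a Markov chain with a fixed transition matrix $\mathbf{P}$, unaffected by the decoder's actions. At each time $t$ an encoder observes $s_t$ and decides $c_t\in\{0,1\}$ (transmit $s_t$ or not); the decoder observes $s_t$ if $c_t=1$ and a no-transmission symbol otherwise, and outputs an estimate $a_t\in\mathcal{S}$. The common objective of encoder and decoder is $\mathbb{E}\big[\sum_t\gamma^t(\mathbb{1}[a_t=s_t]-\beta c_t)\big]$ with $\gamma\in[0,1)$ and communication cost $\beta>0$. The decoder's policy depends on the time since the last transmission and the last transmitted state, and the decoder knows the encoder's policy (so non-transmission can carry implicit information). The perfect-estimation constraint refers to requiring that the decoder's belief over $s_t$ is always a point mass. *)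

(* Defs.v *)
From HB Require Import structures.
From mathcomp Require Import all_boot all_order all_algebra.
From mathcomp Require Import all_classical all_reals all_analysis.
Set Implicit Arguments. Unset Strict Implicit. Unset Printing Implicit Defensive.
Import Order.TTheory GRing.Theory Num.Theory.
Local Open Scope ring_scope.

Section RemoteEstimation.
Variables (R : realType) (S : finType).

(* Decoder information state: (time since last transmission, last transmitted
   state); [None] = no transmission has happened yet (then the counter is the
   time since the start). *)
Definition dstate := (nat * option S)%type.

(* Encoder: sees the decoder's information state before time t and the
   current state s_t, decides whether to transmit. *)
Definition encoder := nat -> option S -> S -> bool.
(* Decoder: outputs an estimate from (time since last transmission, last
   transmitted state), after the time-t observation has been incorporated. *)
Definition decoder := nat -> option S -> S.

Definition init_dstate : dstate := (0%N, None).

Definition upd_dstate (e : encoder) (sg : dstate) (s : S) : dstate :=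
  if e sg.1 sg.2 s then (0%N, Some s) else (sg.1.+1, sg.2).

Definition run_dstate (e : encoder) (l : seq S) : dstate :=
  foldl (upd_dstate e) init_dstate l.

(* reward at the last time of a trajectory x :: l, i.e. at time size l:
   1[a_t = s_t] - beta * c_t *)
Definition stage_reward (beta : R) (e : encoder) (d : decoder) (x : S) (l : seq S) : R :=
  let past := run_dstate e (belast x l) in
  let s := last x l in
  let c := e past.1 past.2 s in
  let sg := upd_dstate e past s in
  (d sg.1 sg.2 == s)%:R - beta * c%:R.

Fixpoint path_prob (P : S -> S -> R) (x : S) (l : seq S) : R :=
  if l is y :: l' then P x y * path_prob P y l' else 1.

Definition expected_reward (mu : S -> R) (P : S -> S -> R) (beta : R)
    (e : encoder) (d : decoder) (t : nat) : R :=
  \sum_(w : t.+1.-tuple S)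
     mu (thead w) * path_prob P (thead w) (behead w) *
     stage_reward beta e d (thead w) (behead w).

Definition objective (mu : S -> R) (P : S -> S -> R) (gamma beta : R)
    (e : encoder) (d : decoder) : R :=
  limn (fun n => \sum_(t < n) gamma ^+ t * expected_reward mu P beta e d t).

Definition nash_equilibrium (mu : S -> R) (P : S -> S -> R) (gamma beta : R)
    (e : encoder) (d : decoder) : Prop :=
  (forall e' : encoder, objective mu P gamma beta e' d <= objective mu P gamma beta e d) /\
  (forall d' : decoder, objective mu P gamma beta e d' <= objective mu P gamma beta e d).

Definition prob_vector (mu : S -> R) : Prop :=
  (forall s, 0 <= mu s) /\ \sum_(s : S) mu s = 1.

Definition stochastic (P : S -> S -> R) : Prop :=
  (forall s s', 0 <= P s s') /\ (forall s, \sum_(s' : S) P s s' = 1).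

End RemoteEstimation.

(* Main.v *)
Require Import Defs.
From HB Require Import structures.
From mathcomp Require Import all_boot all_order all_algebra.
From mathcomp Require Import all_classical all_reals all_analysis.
From mathcomp Require Import lra.
Import Order.TTheory GRing.Theory Num.Theory.
Local Open Scope ring_scope.

Lemma sum_tupleS (R : realType) (T : finType) n (F : n.+1.-tuple T -> R) :
  \sum_(w : n.+1.-tuple T) F w = \sum_(x : T) \sum_(t : n.-tuple T) F (cons_tuple x t).
Proof.
rewrite pair_big /=.
rewrite (reindex (fun p : T * n.-tuple T => cons_tuple p.1 p.2)) //=.
exists (fun w => (thead w, behead_tuple w)) => [[x t] _|w _] /=.
  by congr pair; apply: val_inj.
by rewrite [RHS]tuple_eta; apply: val_inj.
Qed.

Lemma sum_tuple0 (R : realType) (T : finType) (F : 0.-tuple T -> R) :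
  \sum_(w : 0.-tuple T) F w = F [tuple].
Proof.
rewrite (eq_bigr (fun _ => F [tuple])); last by move=> w _; rewrite tuple0.
by rewrite sumr_const card_tuple expn0.
Qed.

Section Proofs.
Variables (R : realType) (S : finType) (mu : S -> R) (P : S -> S -> R) (gamma beta : R).
Hypotheses (Hmu : prob_vector mu) (HP : stochastic P) (g0 : 0 <= gamma) (g1 : gamma < 1)
  (b0 : 0 < beta) (b1 : beta < 1).

Lemma path_prob_ge0 x l : 0 <= path_prob P x l.
Proof.
elim: l x => [|y l IH] x /=; first exact: ler01.
by rewrite mulr_ge0 //; case: HP.
Qed.

Lemma path_mass n x : \sum_(t : n.-tuple S) path_prob P x t = 1.
Proof.
elim: n x => [|n IH] x; first by rewrite sum_tuple0.
rewrite sum_tupleS /=.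
under eq_bigr => y _ do rewrite -mulr_sumr IH mulr1.
by case: HP.
Qed.

Lemma total_mass t :
  \sum_(w : t.+1.-tuple S) mu (thead w) * path_prob P (thead w) (behead w) = 1.
Proof.
rewrite sum_tupleS.
under eq_bigr => x _.
  under eq_bigr => l _ do rewrite theadE /=.
  rewrite -mulr_sumr path_mass mulr1.
over.
by case: Hmu.
Qed.

Lemma stage_bound (e : encoder S) (d : decoder S) x l : `|stage_reward beta e d x l| <= 1.
Proof.
rewrite /stage_reward.
case: (_ == _); case: (e _ _ _); rewrite /= ?mulr1 ?mulr0 ?subr0 ler_norml;
  apply/andP; split=> //; move: b0 b1; rewrite ?sub0r; lra.
Qed.

Lemma er_bound (e : encoder S) (d : decoder S) t : `|expected_reward mu P beta e d t| <= 1.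
Proof.
rewrite /expected_reward -(total_mass t).
apply: le_trans (ler_norm_sum _ _ _) _.
apply: ler_sum => w _.
rewrite normrM ger0_norm; last by rewrite mulr_ge0 ?path_prob_ge0 //; case: Hmu.
by rewrite ler_piMr ?stage_bound // mulr_ge0 ?path_prob_ge0 //; case: Hmu.
Qed.

Lemma er_mono (e e' : encoder S) (d d' : decoder S) t :
  (forall x l, stage_reward beta e' d' x l <= stage_reward beta e d x l) ->
  expected_reward mu P beta e' d' t <= expected_reward mu P beta e d t.
Proof.
move=> H; apply: ler_sum => w _.
by rewrite ler_wpM2l ?H // mulr_ge0 ?path_prob_ge0 //; case: Hmu.
Qed.

Lemma obj_cvg (e : encoder S) (d : decoder S) :
  cvgn (fun n => \sum_(t < n) gamma ^+ t * expected_reward mu P beta e d t).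
Proof.
have -> : (fun n => \sum_(t < n) gamma ^+ t * expected_reward mu P beta e d t) =
   series (fun t => gamma ^+ t * expected_reward mu P beta e d t).
  by apply/funext => n; rewrite /series /= big_mkord.
apply: normed_cvg.
apply: (@series_le_cvg _ _ (geometric 1 gamma)).
- by move=> n; rewrite /= normr_ge0.
- by move=> n; rewrite /geometric /= mul1r exprn_ge0.
- move=> n; rewrite /geometric /= mul1r normrM ger0_norm ?exprn_ge0 //.
  by rewrite ler_piMr ?exprn_ge0 ?er_bound.
- by apply: is_cvg_geometric_series; rewrite ger0_norm.
Qed.

Lemma obj_mono (e e' : encoder S) (d d' : decoder S) :
  (forall x l, stage_reward beta e' d' x l <= stage_reward beta e d x l) ->
  objective mu P gamma beta e' d' <= objective mu P gamma beta e d.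
Proof.
move=> H; rewrite /objective; apply: ler_lim; try exact: obj_cvg.
apply: nearW => n; apply: ler_sum => t _.
by rewrite ler_wpM2l ?exprn_ge0 ?er_mono.
Qed.

End Proofs.
Definition enc_x (S : finType) (x : S) : encoder S := fun _ _ s => s != x.
Definition dec_x (S : finType) (x : S) : decoder S :=
  fun k o => match k, o with 0%N, Some s => s | _, _ => x end.
Arguments enc_x {S}. Arguments dec_x {S}.

Lemma dom_enc (R : realType) (S : finType) (beta : R) (x : S) (e' : encoder S) x0 l :
  0 <= beta <= 1 ->
  stage_reward beta e' (dec_x x) x0 l <= stage_reward beta (enc_x x) (dec_x x) x0 l.
Proof.
move=> /andP[b0 b1].
rewrite /stage_reward /upd_dstate /=.
move: (run_dstate e' _) (run_dstate (enc_x x) _) (last x0 l) => pe p s.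
rewrite /enc_x /dec_x.
case: (e' _ _ _); case: (eqVneq s x) => [->|ne] /=; rewrite ?eqxx;
  try (rewrite eq_sym (negbTE ne)); rewrite /=; lra.
Qed.

Lemma dom_dec (R : realType) (S : finType) (beta : R) (x : S) (d' : decoder S) x0 l :
  stage_reward beta (enc_x x) d' x0 l <= stage_reward beta (enc_x x) (dec_x x) x0 l.
Proof.
rewrite /stage_reward /upd_dstate /=.
move: (run_dstate (enc_x x) _) (last x0 l) => p s.
rewrite /enc_x /dec_x.
case: (eqVneq s x) => [->|ne] /=; rewrite ?eqxx lerD2r ?ler_nat; case: (_ == _) => //.
Qed.

Theorem corollary1 (R : realType) (S : finType) (mu : S -> R) (P : S -> S -> R)
    (gamma beta : R) :
  prob_vector mu -> stochastic P ->
  0 <= gamma -> gamma < 1 -> 0 < beta -> beta < 1 ->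
  exists f : S -> encoder S * decoder S,
    (forall x y, f x = f y -> x = y) /\
    (forall x, nash_equilibrium mu P gamma beta (f x).1 (f x).2).
Proof.
move=> Hmu HP g0 g1 b0 b1.
exists (fun x => (enc_x x, dec_x x)); split.
  move=> x y [] /(congr1 (fun e => e 0%N None x)); rewrite /enc_x eqxx.
  by move/esym/negbFE/eqP.
move=> x; split => /=.
  move=> e'; apply: obj_mono => // x0 l; apply: dom_enc.
  by apply/andP; split; lra.
by move=> d'; apply: obj_mono => // x0 l; apply: dom_dec.
Qed.
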